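(* Let $G=(V,E)$ be a graph with arboricity $\alpha$, let $h\le\log\alpha$, and consider Procedure Arboricity Edge-Coloring$(G,h)$. For every $0\le i\le h$, the arboricity $\alpha^{(i)}$ of any graph $G^{(i)}$ computed after $i$ levels of recursion of the invocation of Procedure Oriented Edge-Coloring inside Arboricity Edge-Coloring satisfies $\alpha^{(i)}\le\frac{\alpha}{2^{i-1}}+1$.
   Context: Logarithms are base 2. The arboricity of a graph $H$ is $\max_{S\subseteq V(H),|S|\ge2}\lceil |E(H[S])|/(|S|-1)\rceil$. An oriented degree-splitting of $(H,\mu)$ with discrepancy $\kappa$ is a partition $(E_1,E_2)$ of $E(H)$ such that for every vertex $v$, the numbers of incoming edges of $v$ in $E_1$ and in $E_2$ differ by at most $\kappa$, and likewise for outgoing edges. Procedure Forests-Decomposition Orientation$(G)$: starting from $\mathcal A=V$, repeatedly pick $v\in\mathcal A$ of minimum degree in $G[\mathcal A]$, orient every edge from $v$ to its neighbours in $\mathcal A$, and remove $v$ from $\mathcal A$, until $\mathcal A=\emptyset$ (the resulting orientation has out-degree at most $2\alpha$). Procedure Oriented Edge-Coloring$(H,\mu,h)$: if $h=0$, return a proper $(\Delta(H)+1)$-edge-coloring of $H$ from a base-case subroutine; otherwise compute an oriented degree-splitting $(E_1,E_2)$ of $(H,\mu)$ with discrepancy at most 1, recursively call Oriented Edge-Coloring$(H_1,\mu,h-1)$ and Oriented Edge-Coloring$(H_2,\mu,h-1)$ on $H_1=(V,E_1)$, $H_2=(V,E_2)$ (orientation induced by $\mu$), and merge the colorings using disjoint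 palettes. Procedure Arboricity Edge-Coloring$(G,h)$: compute $\mu=$ Forests-Decomposition Orientation$(G)$ and return Oriented Edge-Coloring$(G,\mu,h)$. $G^{(0)}=G$, and a graph computed after $i$ levels of recursion is any $H_1$ or $H_2$ produced from a graph computed after $i-1$ levels. *)

(* Defs.v *)
From mathcomp Require Import all_boot all_order all_algebra.
Set Implicit Arguments. Unset Strict Implicit. Unset Printing Implicit Defensive.
Import Order.TTheory GRing.Theory Num.Theory.

Section Graphs.
Variable V : finType.

Definition simple_graph (E : {set {set V}}) : Prop :=
  forall e, e \in E -> #|e| = 2.

Definition ceil_div (m k : nat) : nat := (m + k.-1) %/ k.

Definition nedges_in (E : {set {set V}}) (S : {set V}) : nat :=
  #|[set e in E | e \subset S]|.

(* arboricity = max over S with |S| >= 2 of ceil(|E(H[S])| / (|S|-1)) (0 if no such S) *)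
Definition arboricity (E : {set {set V}}) : nat :=
  \max_(S : {set V} | 2 <= #|S|) ceil_div (nedges_in E S) (#|S| - 1).

Definition undir (p : V * V) : {set V} := [set p.1; p.2].

Definition deg_in (E : {set {set V}}) (A : {set V}) (v : V) : nat :=
  #|[set w in A | [set v; w] \in E]|.

(* s is a possible sequence of vertices removed by Procedure
   Forests-Decomposition Orientation: every vertex appears once, and the
   k-th removed vertex has minimum degree in G[A_k], A_k = remaining vertices. *)
Definition peeling_order (E : {set {set V}}) (s : seq V) : Prop :=
  uniq s /\ (forall v, v \in s) /\
  forall k, k < size s ->
    forall x0 : V,
    let A := [set x in drop k s] in
    forall w, w \in A -> deg_in E A (nth x0 s k) <= deg_in E A w.

(* D (a set of directed edges (u,v), meaning u -> v) is an orientation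
   produced by some run of Forests-Decomposition Orientation(G):
   edges are oriented from the earlier removed endpoint to the later one. *)
Definition fd_orientation (E : {set {set V}}) (D : {set V * V}) : Prop :=
  exists s, peeling_order E s /\
    D = [set p : V * V | (undir p \in E) && (index p.1 s < index p.2 s)].

Definition outdeg (F : {set V * V}) (v : V) : nat := #|[set p in F | p.1 == v]|.
Definition indeg (F : {set V * V}) (v : V) : nat := #|[set p in F | p.2 == v]|.

Definition oriented_splitting (F F1 F2 : {set V * V}) (kappa : nat) : Prop :=
  F1 :|: F2 = F /\ F1 :&: F2 = set0 /\
  forall v,
    [/\ outdeg F1 v <= outdeg F2 v + kappa, outdeg F2 v <= outdeg F1 v + kappa,
        indeg F1 v <= indeg F2 v + kappa & indeg F2 v <= indeg F1 v + kappa].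

(* computed D h i F : F (oriented by mu = D) is a graph computed after i levels
   of recursion of Oriented Edge-Coloring(G, D, h), for any admissible choice
   of the splittings (discrepancy at most 1) made by the procedure.
   A splitting at level i happens only when the remaining parameter h - i > 0. *)
Inductive computed (D : {set V * V}) (h : nat) : nat -> {set V * V} -> Prop :=
  | computed0 : computed D h 0 D
  | computedL i F F1 F2 : i < h -> computed D h i F ->
      oriented_splitting F F1 F2 1 -> computed D h i.+1 F1
  | computedR i F F1 F2 : i < h -> computed D h i F ->
      oriented_splitting F F1 F2 1 -> computed D h i.+1 F2.

End Graphs.

(* Main.v *)
Require Import Defs.
From mathcomp Require Import all_boot all_order all_algebra.
From mathcomp Require Import zify ring lra.
Import Order.TTheory GRing.Theory Num.Theory.

Section S.
Variable V : finType.
Implicit Types (E : {set {set V}}) (F D : {set V * V}).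

Lemma outdeg_split F F1 F2 k v : oriented_splitting F F1 F2 k ->
  outdeg F v = outdeg F1 v + outdeg F2 v.
Proof.
case=> hU [hI _]; rewrite /outdeg -hU.
have -> : [set p in F1 :|: F2 | p.1 == v] =
   [set p in F1 | p.1 == v] :|: [set p in F2 | p.1 == v].
  by apply/setP=> p; rewrite !inE andb_orl.
rewrite cardsU.
have -> : [set p in F1 | p.1 == v] :&: [set p in F2 | p.1 == v] = set0.
  apply/setP=> p; rewrite !inE.
  have : p \in F1 :&: F2 = (p \in set0) by rewrite hI.
  rewrite !inE => h; case: (p \in F1) h => //= ->; by rewrite andbF.
by rewrite cards0 subn0.
Qed.

Lemma computed_inv D h i F : computed D h i F ->
  F \subset D /\ forall v, outdeg F v * 2 ^ i <= outdeg D v + 2 ^ i - 1.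
Proof.
elim=> [|{}i F0 F1 F2 _ _ [IHs IHo] hs|{}i F0 F1 F2 _ _ [IHs IHo] hs].
- by split=> // v; rewrite expn0 muln1; lia.
- split.
    case: hs => hU _; apply: subset_trans IHs; rewrite -hU; exact: subsetUl.
  move=> v; have := IHo v; have := @outdeg_split F0 F1 F2 1 v hs.
  case: hs => _ [_ /(_ v) [h1 _ _ _]].
  have := expn_gt0 2 i; rewrite expnS.
  move: (2 ^ i) => t; nia.
- split.
    case: hs => hU _; apply: subset_trans IHs; rewrite -hU; exact: subsetUr.
  move=> v; have := IHo v; have := @outdeg_split F0 F1 F2 1 v hs.
  case: hs => _ [_ /(_ v) [_ h1 _ _]].
  have := expn_gt0 2 i; rewrite expnS.
  move: (2 ^ i) => t; nia.
Qed.


Lemma out_sum F (X : {set V}) d : (forall v, outdeg F v <= d) ->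
  #|[set p in F | p.1 \in X]| <= d * #|X|.
Proof.
move=> hd.
rewrite -sum1dep_card (partition_big (fun p : V * V => p.1) (mem X)) /=; last first.
  by move=> p /andP[].
rewrite mulnC -sum_nat_const; apply: leq_sum => v vX.
rewrite sum1dep_card; apply: leq_trans (hd v); apply: subset_leq_card.
apply/subsetP=> p; rewrite !inE => /andP[/andP[-> _] ->]; by [].
Qed.

Lemma undir_sub (p : V * V) (S : {set V}) : undir p \subset S -> (p.1 \in S) && (p.2 \in S).
Proof.
move/subsetP=> h; rewrite !h //; rewrite /undir !inE eqxx ?orbT //.
Qed.

Lemma nedges_acyclic E (s : seq V) F d (S : {set V}) :
  F \subset [set p | (undir p \in E) && (index p.1 s < index p.2 s)] ->
  (forall v, outdeg F v <= d) -> 0 < #|S| ->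
  nedges_in (@undir V @: F) S <= d * (#|S| - 1).
Proof.
move=> hFD hd hS.
set T := [set p in F | (p.1 \in S) && (p.2 \in S)].
have h1 : nedges_in (@undir V @: F) S <= #|T|.
  apply: leq_trans (leq_imset_card (@undir V) T).
  apply: subset_leq_card; apply/subsetP=> e; rewrite inE => /andP[/imsetP[p pF ->] hsub].
  by apply: imset_f; rewrite inE pF undir_sub.
apply: leq_trans h1 _.
case/card_gt0P: hS => x0 x0S.
pose m := [arg max_(x > x0 in S) index x s].
have mS : m \in S by rewrite /m; case: arg_maxnP.
have mmax : forall y, y \in S -> index y s <= index m s.
  by rewrite /m; case: arg_maxnP => // z _ H y yS; apply: H.
have h2 : T \subset [set p in F | p.1 \in S :\ m].
  apply/subsetP=> p; rewrite !inE => /andP[pF /andP[p1S p2S]].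
  rewrite pF p1S /= andbT; apply/eqP=> e.
  have := subsetP hFD p pF; rewrite inE => /andP[_].
  by rewrite e ltnNge mmax.
apply: leq_trans (subset_leq_card h2) _.
apply: leq_trans (@out_sum F (S :\ m) d hd) _.
by rewrite (cardsD1 m S) mS add1n subn1.
Qed.


Lemma edge_neq E (a b : V) : simple_graph E -> [set a; b] \in E -> a != b.
Proof. by move=> hE /hE; rewrite cards2; case: (a != b). Qed.

Lemma ceil_divP m k : 0 < k -> m <= ceil_div m k * k.
Proof.
move=> hk; rewrite /ceil_div.
have := divn_eq (m + k.-1) k; have := ltn_pmod (m + k.-1) hk.
move: ((m + k.-1) %/ k) ((m + k.-1) %% k) => q r; nia.
Qed.

Lemma ceil_div_le m k d : 0 < k -> m <= d * k -> ceil_div m k <= d.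
Proof.
move=> hk hm; rewrite /ceil_div -ltnS ltn_divLR //; lia.
Qed.

Lemma handshake E (A : {set V}) : simple_graph E ->
  \sum_(w in A) deg_in E A w <= 2 * nedges_in E A.
Proof.
move=> hE.
have -> : \sum_(w in A) deg_in E A w =
   \sum_(w in A) \sum_(x | (x \in A) && ([set w; x] \in E)) 1.
  by apply: eq_bigr => w _; rewrite sum1dep_card.
rewrite pair_big_dep /= sum1dep_card.
set P := [set p | _].
pose f (p : V * V) := ([set p.1; p.2], (enum_rank p.1 < enum_rank p.2)%N).
have finj : {in P &, injective f}.
  { move=> [a b] [c d]; rewrite !inE /= => /and3P[_ _ eab] /and3P[_ _ ecd].
  have nab := @edge_neq E a b hE eab; have ncd := @edge_neq E c d hE ecd.
  rewrite /f /= => [[e1 e2]].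
  have : c \in [set a; b] by rewrite e1 set21.
  have : d \in [set a; b] by rewrite e1 set22.
  rewrite !inE => /orP[]/eqP hd /orP[]/eqP hc; subst; try by [].
  all: try by rewrite eqxx in ncd.
  exfalso; move: e2.
  have : (enum_rank a : nat) != enum_rank b.
    by apply: contra nab => /eqP/val_inj/enum_rank_inj ->.
  by case: ltngtP. }
rewrite -(card_in_imset finj).
apply: leq_trans (_ : #|setX [set e in E | e \subset A] [set: bool]| <= _).
  apply: subset_leq_card; apply/subsetP=> _ /imsetP[[a b] + ->].
  rewrite !inE /= => /and3P[aA bA eab]; rewrite eab andbT /=.
  apply/subsetP=> x; rewrite !inE => /orP[]/eqP->; by [].
by rewrite cardsX cardsT card_bool mulnC.
Qed.


Lemma min_deg E (A : {set V}) v : simple_graph E -> v \in A ->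
  (forall w, w \in A -> deg_in E A v <= deg_in E A w) ->
  deg_in E A v <= 2 * arboricity E.
Proof.
move=> hE vA hmin.
have hle : deg_in E A v <= #|A| - 1.
  rewrite (cardsD1 v A) vA add1n subn1 /=; apply: subset_leq_card.
  apply/subsetP=> w; rewrite !inE => /andP[wA e]; rewrite wA andbT.
  by have := @edge_neq E v w hE e; rewrite eq_sym.
case: (leqP 2 #|A|) => hA; last first.
  apply: leq_trans hle _; lia.
have h1 : #|A| * deg_in E A v <= \sum_(w in A) deg_in E A w.
  rewrite -sum_nat_const; apply: leq_sum => w wA; exact: hmin.
have h2 := @handshake E A hE.
have h3 : ceil_div (nedges_in E A) (#|A| - 1) <= arboricity E.
  by apply: (@leq_bigmax_cond _ (fun S : {set V} => 2 <= #|S|)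
     (fun S => ceil_div (nedges_in E S) (#|S| - 1)) A).
have h4 := @ceil_divP (nedges_in E A) (#|A| - 1) ltac:(lia).
move: h1 h2 h3 h4.
move: (#|A|) (deg_in E A v) (\sum_(w in A) deg_in E A w) (nedges_in E A)
  (arboricity E) (ceil_div (nedges_in E A) (#|A| - 1)) hA => a dv sm ne al c ha.
nia.
Qed.

Lemma in_drop (s : seq V) k w : w \in s -> k <= index w s -> w \in drop k s.
Proof.
move=> ws hk.
have hi : index w s < size s by rewrite index_mem.
have -> : w = nth w (drop k s) (index w s - k).
  by rewrite nth_drop subnKC // nth_index.
apply: mem_nth; rewrite size_drop; apply: ltn_sub2r => //; exact: leq_ltn_trans hk hi.
Qed.

Lemma outdeg_D E (s : seq V) v : simple_graph E -> peeling_order E s ->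
  outdeg [set p : V * V | (undir p \in E) && (index p.1 s < index p.2 s)] v
    <= 2 * arboricity E.
Proof.
move=> hE [us [alls hpeel]].
set k := index v s.
have ks : k < size s by rewrite index_mem.
have := hpeel k ks v; rewrite /= nth_index //.
set A := [set x in drop k s] => hmin.
have vA : v \in A by rewrite inE in_drop.
apply: leq_trans (@min_deg E A v hE vA hmin).
rewrite /outdeg /deg_in.
have inj : {in [set p in [set p : V * V | (undir p \in E) && (index p.1 s < index p.2 s)]
               | p.1 == v] &, injective (fun p : V * V => p.2)}.
  move=> [a b] [c d]; rewrite !inE /= => /andP[_ /eqP ->] /andP[_ /eqP ->] ->; by [].
rewrite -(card_in_imset inj); apply: subset_leq_card.
apply/subsetP=> _ /imsetP[[a b] + ->]; rewrite !inE /= => /andP[/andP[e hi] /eqP av].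
subst a; rewrite /undir /= in e; rewrite e andbT.
by apply: in_drop => //; apply: ltnW.
Qed.

End S.
Local Open Scope ring_scope.

Lemma pow_eq (i al : nat) :
  (al%:R / (2 : rat) ^ (Posz i - 1) + 1) = (2 * al + 2 ^ i)%N%:R / (2 ^ i)%N%:R.
Proof.
rewrite expfzDr // natrD natrM natrX.
have -> : (2 : rat) ^ (- 1) = 2^-1 by [].
have -> : (2 : rat) ^ (Posz i) = 2 ^+ i by [].
have h : (2 : rat) ^+ i != 0 by rewrite expf_neq0.
field; rewrite h //.
Qed.

Theorem lemma4p10 (V : finType) (E : {set {set V}}) (h : nat) (D : {set V * V}) :
  simple_graph E ->
  (2 ^ h <= arboricity E)%N ->
  fd_orientation E D ->
  forall (i : nat) (F : {set V * V}),
    (i <= h)%N ->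
    computed D h i F ->
    ((arboricity (@undir V @: F))%:R : rat)
      <= (arboricity E)%:R / (2 : rat) ^ (Posz i - 1) + 1.
Proof.
move=> hE _ [s [hs hD]] i F _ hc.
have [hFD hoF] := computed_inv V D h i F hc.
rewrite pow_eq.
set al := arboricity E.
have tpos : (0 < 2 ^ i)%N := expn_gt0 2 i.
move: tpos hoF; set t := (2 ^ i)%N => tpos hoF.
have hoD v : (outdeg D v <= 2 * al)%N by rewrite hD; exact: (outdeg_D V E s v hE hs).
pose d := ((2 * al + t - 1) %/ t)%N.
have hdF v : (outdeg F v <= d)%N.
  rewrite leq_divRL //; have := hoF v; have := hoD v; lia.
have hFD' : F \subset [set p : V * V | (undir p \in E) && (index p.1 s < index p.2 s)%N].
  by rewrite -hD.
have harb : (arboricity (@undir V @: F) <= d)%N.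
  apply/bigmax_leqP => S hS; apply: ceil_div_le; first lia.
  apply: (nedges_acyclic V E s F d S hFD' hdF); lia.
have hdt : (d * t <= 2 * al + t - 1)%N by apply: leq_divM.
have hfin : (arboricity (@undir V @: F) * t <= 2 * al + t)%N.
  apply: leq_trans (leq_mul harb (leqnn t)) _; lia.
have tR : (0 : rat) < t%:R by rewrite ltr0n.
rewrite ler_pdivlMr // -natrM ler_nat; exact: hfin.
Qed.
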